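(* Let $(A,+,\circ)$ be a finite left brace with cyclic additive group, let $(A,\cdot)$ be its decomposable associated cycle set, let $g$ be an element of a transitive cycle base of $A$, and let $(A,\bullet)$ be the uniconnected associated cycle set $a\bullet b:=\lambda_a(g)^{-}\circ b$. Then $(A,\cdot)$ and $(A,\bullet)$ have finite multipermutation level and $mpl(A,\cdot)=mpl(A,\bullet)$. Moreover, for every $n\in\mathbb{N}$, the underlying sets of $\mathrm{Ret}^n(A,\cdot)$ and $\mathrm{Ret}^n(A,\bullet)$ coincide (as quotients of $A$).
   Context: A left brace is a set $A$ with two operations such that $(A,+)$ is an abelian group, $(A,\circ)$ is a group, and $a\circ(b+c)=a\circ b-a+a\circ c$. $\lambda_a(b):=-a+a\circ b$; $a\mapsto\lambda_a$ is a homomorphism $(A,\circ)\to\mathrm{Aut}(A,+)$. $a^{-}$ is the inverse in $(A,\circ)$. A transitive cycle base is a single $\lambda$-orbit generating $(A,+)$. A (non-degenerate) cycle set is a set $X$ with an operation such that each $\sigma_x:y\mapsto x\cdot y$ is bijective, $(x\cdot y)\cdot(x\cdot z)=(y\cdot x)\cdot(y\cdot z)$, and $x\mapsto x\cdot x$ is bijective. $\mathrm{Ret}(X)$ is the quotient cycle set of $X$ by $x\sim y\iff\sigma_x=\sigma_y$; $\mathrm{Ret}^0(X)=X$, $\mathrm{Ret}^i(X)=\mathrm{Ret}(\mathrm{Ret}^{i-1}(X))$; $mpl(X)$ is the least $n$ with $|\mathrm{Ret}^n(X)|=1$ (finite multipermutation level means such $n$ exists). The decomposable associated cycle set is $(A,\cdot)$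 with $a\cdot b:=\lambda_a^{-1}(b)$. The cycle set $(A,\bullet)$ is uniconnected, i.e. the group generated by its left multiplications acts regularly on $A$. *)

(* Defs.v *)
From mathcomp Require Import all_boot all_order all_algebra.
Set Implicit Arguments. Unset Strict Implicit. Unset Printing Implicit Defensive.
Import GRing.Theory.
Local Open Scope ring_scope.

Definition is_left_brace (T : zmodType) (circ : T -> T -> T) (inv : T -> T)
    (e : T) : Prop :=
  [/\ associative circ, left_id e circ, right_id e circ,
      (forall a, circ (inv a) a = e) & (forall a, circ a (inv a) = e)] /\
  (forall a b c, circ a (b + c) = circ a b - a + circ a c).

Definition cyclic_add (T : zmodType) : Prop :=
  exists x : T, forall a : T, exists n : int, a = x *~ n.

Definition brace_lambda (T : zmodType) (circ : T -> T -> T) (a b : T) : T :=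
  - a + circ a b.

Definition lambda_orbit (T : zmodType) (circ : T -> T -> T) (x : T) : T -> Prop :=
  fun y => exists a, y = brace_lambda circ a x.

Definition generates_add (T : finZmodType) (X : T -> Prop) : Prop :=
  forall a : T, exists (s : seq T) (c : T -> int),
    (forall x, x \in s -> X x) /\ a = \sum_(x <- s) x *~ c x.

Definition transitive_cycle_base (T : finZmodType) (circ : T -> T -> T)
    (X : T -> Prop) : Prop :=
  (exists x, forall y, X y <-> lambda_orbit circ x y) /\ generates_add X.

(* Kernel on T of the projection T -> Ret^n(T, op):
   ret_rel op 0 = equality;
   x ~_{n+1} y  iff  sigma_[x]_n = sigma_[y]_n on Ret^n, i.e.
   forall z, op x z ~_n op y z. *)
Fixpoint ret_rel (T : Type) (op : T -> T -> T) (n : nat) : T -> T -> Prop :=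
  match n with
  | 0 => fun x y => x = y
  | n'.+1 => fun x y => forall z, ret_rel op n' (op x z) (op y z)
  end.

Definition ret_trivial (T : Type) (op : T -> T -> T) (n : nat) : Prop :=
  forall x y : T, ret_rel op n x y.

Definition is_mpl (T : Type) (op : T -> T -> T) (n : nat) : Prop :=
  ret_trivial op n /\ forall m, ret_trivial op m -> (n <= m)%N.

(* Main.v *)
Require Import Defs.
From mathcomp Require Import all_boot all_order all_algebra.
From Stdlib Require Import Classical ClassicalEpsilon.
Set Implicit Arguments. Unset Strict Implicit. Unset Printing Implicit Defensive.
Import GRing.Theory.
Local Open Scope ring_scope.

Definition dP (P : Prop) : bool :=
  if excluded_middle_informative P then true else false.

Lemma dPP (P : Prop) : reflect P (dP P).
Proof. by rewrite /dP; case: excluded_middle_informative => p; constructor. Qed.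

Lemma pigeon (U : finType) (R : U -> U -> Prop) :
  (forall x, R x x) -> (forall x y, R x y -> R y x) ->
  (forall x y z, R x y -> R y z -> R x z) ->
  forall f : U -> U, (forall x y, R (f x) (f y) -> R x y) ->
  forall a, exists r, R (f r) a.
Proof.
move=> Rr Rs Rt f Hf a.
pose rep x := odflt a [pick y | dP (R x y)].
have repR : forall x, R x (rep x).
  move=> x; rewrite /rep; case: pickP => [y /dPP //|H].
  have hx := Rr x; move/dPP: hx; by rewrite H.
have repE : forall x y, R x y -> rep x = rep y.
  move=> x y h; rewrite /rep.
  have -> : [pick z | dP (R x z)] = [pick z | dP (R y z)]; last done.
  apply: eq_pick => z; apply/dPP/dPP => h'; [exact: Rt (Rs _ _ h) h' | exact: Rt h h'].
have repK : forall x, rep (rep x) = rep x.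
  by move=> x; apply: repE; apply: Rs; apply: repR.
pose Reps := [set rep x | x in U].
pose phi r := rep (f r).
have sub : [set phi r | r in Reps] \subset Reps.
  apply/subsetP => _ /imsetP [r _ ->]; exact: imset_f.
have inj : {in Reps &, injective phi}.
  move=> r1 r2 /imsetP [x1 _ ->] /imsetP [x2 _ ->] he.
  have h1 : R (f (rep x1)) (f (rep x2)).
    apply: Rt (repR _) _; rewrite /phi in he; rewrite he; exact: Rs (repR _).
  have := repE _ _ (Hf _ _ h1); by rewrite !repK.
have eqS : [set phi r | r in Reps] = Reps.
  by apply/eqP; rewrite eqEcard sub card_in_imset // leqnn.
have : rep a \in Reps by apply: imset_f.
rewrite -eqS => /imsetP [r _ hr]; exists r.
apply: Rt (repR (f r)) _; rewrite -/(phi r) -hr; exact: Rs (repR a).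
Qed.

Section Brace.
Variables (T : finZmodType) (circ : T -> T -> T) (inv : T -> T) (e : T).
Hypothesis Hb : is_left_brace circ inv e.
Local Notation lam := (brace_lambda circ).

Lemma cA : associative circ. Proof. by case: Hb => [[]]. Qed.
Lemma cl : left_id e circ. Proof. by case: Hb => [[]]. Qed.
Lemma cr : right_id e circ. Proof. by case: Hb => [[]]. Qed.
Lemma cVl a : circ (inv a) a = e. Proof. by case: Hb => [[]]. Qed.
Lemma cVr a : circ a (inv a) = e. Proof. by case: Hb => [[]]. Qed.
Lemma cD a b c : circ a (b + c) = circ a b - a + circ a c. Proof. by case: Hb. Qed.

Lemma circ_a0 a : circ a 0 = a.
Proof.
have := cD a 0 0; rewrite addr0 => h.
have : circ a 0 - a + circ a 0 - circ a 0 = circ a 0 - circ a 0 by rewrite -h.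
by rewrite addrK subrr => /eqP; rewrite subr_eq0 => /eqP.
Qed.

Lemma e0 : e = 0.
Proof. by rewrite -(circ_a0 e) cl. Qed.

Lemma lamD a u v : lam a (u + v) = lam a u + lam a v.
Proof.
rewrite /brace_lambda cD !addrA; congr (_ + _).
Qed.

Lemma lam0 a : lam a 0 = 0.
Proof. by rewrite /brace_lambda circ_a0 addNr. Qed.

Lemma lamN a u : lam a (- u) = - lam a u.
Proof.
apply: (addrI (lam a u)); by rewrite -lamD !subrr lam0.
Qed.

Lemma lamB a u v : lam a (u - v) = lam a u - lam a v.
Proof. by rewrite lamD lamN. Qed.

Lemma lamMn a u m : lam a (u *+ m) = lam a u *+ m.
Proof. elim: m => [|m IH]; first by rewrite !mulr0n lam0.
by rewrite !mulrS lamD IH. Qed.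

Lemma lamMz a u n : lam a (u *~ n) = lam a u *~ n.
Proof. case: n => m /=; first exact: lamMn.
by rewrite lamN lamMn. Qed.

Lemma lamM a b z : lam (circ a b) z = lam a (lam b z).
Proof.
rewrite [lam b z]/brace_lambda lamD lamN /brace_lambda -cA opprD opprK.
by rewrite addrA (addrAC a) subrr add0r.
Qed.

Lemma lam_id z : lam 0 z = z.
Proof. by rewrite /brace_lambda oppr0 add0r -e0 cl. Qed.

Lemma lamVK a z : lam (inv a) (lam a z) = z.
Proof. by rewrite -lamM cVl e0 lam_id. Qed.
Lemma lamKV a z : lam a (lam (inv a) z) = z.
Proof. by rewrite -lamM cVr e0 lam_id. Qed.

Lemma circ_lam a b : circ a b = a + lam a b.
Proof. by rewrite /brace_lambda addrA subrr add0r. Qed.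

Lemma add_circ a b : a + b = circ a (lam (inv a) b).
Proof. by rewrite circ_lam lamKV. Qed.

Lemma invK a : inv (inv a) = a.
Proof.
by rewrite -[LHS]cr -(cVl a) cA cVl cl.
Qed.

Lemma lam_inv a : lam a (inv a) = - a.
Proof.
apply: (addrI a); by rewrite -circ_lam cVr e0 subrr.
Qed.


Record good (R : T -> T -> Prop) : Prop := Good {
  gR : forall x, R x x;
  gS : forall {x y}, R x y -> R y x;
  gT : forall {x y z}, R x y -> R y z -> R x z;
  gD : forall {a b c d}, R a b -> R c d -> R (a + c) (b + d);
  gN : forall {a b}, R a b -> R (- a) (- b);
  gL : forall {a b} c, R a b -> R (lam c a) (lam c b);
  gC : forall {a b} z, R a b -> R (lam a z) (lam b z) }.

Definition next (R : T -> T -> Prop) x y := forall z, R (lam x z) (lam y z).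

Lemma good_sub R x y : good R -> R x y <-> R (x - y) 0.
Proof.
move=> G; split => h.
  by rewrite -(subrr y); apply: (gD G) => //; apply: (gR G).
have := gD G h (gR G y); by rewrite subrK add0r.
Qed.

Lemma good_next_sub R : good R -> forall x y, R x y -> next R x y.
Proof. by move=> G x y h z; apply: (gC G). Qed.

Section Step.
Variable R : T -> T -> Prop.
Hypothesis G : good R.
Let S d := forall z, R (lam d z) z.

Lemma S_conj s c : S s -> S (lam c s).
Proof.
move=> Ss.
set t := circ (circ c s) (inv c).
have St : S t.
  move=> z; rewrite /t !lamM.
  have := gL G c (Ss (lam (inv c) z)); by rewrite lamKV.
have e1 : circ c s = circ t c by rewrite /t -cA cVl cr.
have h1 : R (c + lam c s) (t + c).
  rewrite -circ_lam e1 circ_lam; apply: (gD G); [exact (gR G t) | exact: St].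
have h2 : R (lam c s) t.
  have := gD G (gR G (- c)) h1.
  by rewrite addKr [t + c]addrC addKr.
move=> z; apply: (gT G) (St z); exact (gC G z h2).
Qed.

Lemma S0 : S 0.
Proof. by move=> z; rewrite lam_id; exact (gR G _). Qed.

Lemma SD a b : S a -> S b -> S (a + b).
Proof.
move=> Sa Sb; rewrite add_circ.
have Sw : S (lam (inv a) b) by apply: S_conj.
move=> z; rewrite lamM; apply: (gT G) (Sw z); exact: Sa.
Qed.

Lemma SV a : S a -> S (inv a).
Proof.
move=> Sa z; have := Sa (lam (inv a) z); rewrite lamKV => h; exact (gS G h).
Qed.

Lemma SN a : S a -> S (- a).
Proof. by move=> Sa; rewrite -lam_inv; apply/S_conj/SV. Qed.

Lemma next_dec x y : next R x y -> S (lam (inv y) (x - y)).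
Proof.
move=> h z; have := gL G (inv y) (h z).
have ex : x = circ y (lam (inv y) (x - y)) by rewrite -add_circ addrC subrK.
by rewrite {1}ex lamM !lamVK.
Qed.

Lemma next_S x y : next R x y <-> S (x - y).
Proof.
split.
  move=> h; have := S_conj y (next_dec h); by rewrite lamKV.
move=> Sd z.
have -> : x = circ (x - y) (lam (inv (x - y)) y) by rewrite -add_circ subrK.
rewrite lamM; apply: (gT G (Sd _)).
have := Sd (lam (inv (x - y)) y); rewrite lamKV => h; exact (gC G z (gS G h)).
Qed.

Lemma good_next : good (next R).
Proof.
split.
- by move=> x z; exact (gR G _).
- by move=> x y h z; exact (gS G (h z)).
- by move=> x y w h1 h2 z; exact (gT G (h1 z) (h2 z)).
- move=> a b c d /next_S h1 /next_S h2; apply/next_S.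
  by rewrite opprD addrACA; apply: SD.
- move=> a b /next_S h; apply/next_S; rewrite -opprD; exact: SN.
- move=> a b c /next_S h; apply/next_S; rewrite -lamB; exact: S_conj.
- move=> a b z h; apply/next_S.
  have Sd := next_dec h; set d := lam (inv b) (a - b) in Sd.
  have ea : a = circ b d by rewrite /d -add_circ addrC subrK.
  rewrite ea lamM -lamB; apply: S_conj.
  have h0 : R (lam d z - z) 0 := proj1 (good_sub (lam d z) z G) (Sd z).
  move=> q; have := gC G q h0; by rewrite lam_id.
Qed.

End Step.


Section Gen.
Variables (X : T -> Prop) (g : T).
Hypothesis Hcyc : cyclic_add T.
Hypothesis HX : transitive_cycle_base circ X.
Hypothesis Xg : X g.

Lemma lam_comm a b z : lam a (lam b z) = lam b (lam a z).
Proof.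
case: Hcyc => x0 Hx.
case: (Hx z) => n ->; case: (Hx (lam b x0)) => k hk; case: (Hx (lam a x0)) => m hm.
rewrite !lamMz hk hm !lamMz hk hm.
by rewrite (mulrzAC m k).
Qed.

Lemma gen_all (Q : T -> Prop) : Q 0 -> (forall a b, Q a -> Q b -> Q (a + b)) ->
  (forall a, Q a -> Q (- a)) -> (forall c, Q (lam c g)) -> forall a, Q a.
Proof.
move=> Q0 QD QN Qg.
have QX : forall y, X y -> Q y.
  case: HX => [[x0 Hx0] _] y /Hx0 [a ->].
  case/Hx0: Xg => b gb.
  have -> : x0 = lam (inv b) g by rewrite gb lamVK.
  rewrite -lamM; exact: Qg.
have Qz : forall y n, Q y -> Q (y *~ n).
  move=> y n Qy.
  have Qn : forall m, Q (y *+ m).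
    by elim=> [|m IH]; [rewrite mulr0n | rewrite mulrS; apply: QD].
  case: n => m /=; [exact: Qn | apply: QN; exact: Qn].
move=> a; case: HX => _ /(_ a) [s [c [Hs ->]]].
elim: s Hs => [|x s IH] Hs; first by rewrite big_nil.
rewrite big_cons; apply: QD.
  by apply: Qz; apply: QX; apply: Hs; rewrite inE eqxx.
by apply: IH => y ys; apply: Hs; rewrite inE ys orbT.
Qed.

Section R.
Variable R : T -> T -> Prop.
Hypothesis G : good R.

Lemma gML c p q : R p q -> R (circ c p) (circ c q).
Proof. move=> h; rewrite !circ_lam; exact (gD G (gR G c) (gL G c h)). Qed.

Lemma gMR c p q : R p q -> R (circ p c) (circ q c).
Proof. move=> h; rewrite !circ_lam; exact (gD G h (gC G c h)). Qed.

Lemma gInv p q : R p q -> R (inv p) (inv q).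
Proof.
move=> h; have := gMR (inv q) (gML (inv p) h).
rewrite cVl cl -cA cVr cr => h'; exact (gS G h').
Qed.

Lemma next_g x y : R (lam x g) (lam y g) -> next R x y.
Proof.
move=> h.
set c := circ (inv y) x.
have Hc : R (lam c g) g.
  have := gL G (inv y) h; by rewrite /c lamM lamVK.
have all : forall w, R (lam c w) w.
  apply: (gen_all (Q := fun w => R (lam c w) w)).
  - rewrite lam0; exact (gR G 0).
  - move=> a b ha hb; rewrite lamD; exact (gD G ha hb).
  - move=> a ha; rewrite lamN; exact (gN G ha).
  - move=> d; rewrite lam_comm; exact (gL G d Hc).
move=> w; have := gL G y (all w).
by rewrite -lamM /c cA cVr cl.
Qed.

Lemma bullet_next (op : T -> T -> T) x y :
  (forall a b, op a b = circ (inv (lam a g)) b) ->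
  (forall z, R (op x z) (op y z)) <-> next R x y.
Proof.
move=> Hop; split.
  move=> h; apply: next_g; have := h 0; rewrite !Hop !circ_a0 => h0.
  by have := gInv h0; rewrite !invK.
move=> h z; rewrite !Hop; apply: gMR; apply: gInv; exact (h g).
Qed.

Lemma swap x y : (forall w, R (lam x w) (lam y w)) ->
  forall z, R (lam (inv y) z) (lam (inv x) z).
Proof.
move=> h z; have := gL G (inv x) (h (lam (inv y) z)).
by rewrite lamVK lamKV.
Qed.

Lemma cdot_next (op : T -> T -> T) x y :
  (forall a b, op a b = lam (inv a) b) ->
  (forall z, R (op x z) (op y z)) <-> next R x y.
Proof.
move=> Hop; split.
  move=> h; have := swap (x := inv x) (y := inv y).
  rewrite !invK => h' z; apply: (gS G); apply: h' => w; rewrite -!Hop; exact: h.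
move=> h z; rewrite !Hop; apply: (gS G); exact: swap.
Qed.

End R.
End Gen.

Fixpoint Rn n : T -> T -> Prop :=
  if n is n'.+1 then next (Rn n') else fun x y => x = y.

Lemma good_Rn n : good (Rn n).
Proof.
elim: n => [|n IH] /=; last exact: good_next.
by split=> /= *; subst.
Qed.


Section Fin.
Variables (X : T -> Prop) (g : T).
Hypothesis Hcyc : cyclic_add T.
Hypothesis HX : transitive_cycle_base circ X.
Hypothesis Xg : X g.

Lemma growth n : ~ (forall x y, Rn n x y) -> exists d, Rn n.+1 d 0 /\ ~ Rn n d 0.
Proof.
move=> nt; apply: NNPP => hn; apply: nt.
have G := good_Rn n.
have back : forall x y, Rn n.+1 x y -> Rn n x y.
  move=> x y h; apply/(good_sub x y G); apply: NNPP => h'; apply: hn.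
  exists (x - y); split=> //; exact: (proj1 (good_sub x y (good_Rn n.+1)) h).
have [r hr] := pigeon (gR G) (fun x y h => gS G h) (fun x y z h1 h2 => gT G h1 h2)
   (f := fun x => lam x g) (fun x y h => back x y (next_g Hcyc HX Xg G h)) 0.
have Rg0 : Rn n g 0.
  have := gL G (inv r) hr; by rewrite lamVK lam0.
have all : forall w, Rn n w 0.
  apply: (gen_all HX Xg (Q := fun w => Rn n w 0)).
  - exact (gR G 0).
  - move=> a b ha hb; have := gD G ha hb; by rewrite addr0.
  - move=> a ha; have := gN G ha; by rewrite oppr0.
  - move=> c; have := gL G c Rg0; by rewrite lam0.
move=> x y; apply/(good_sub x y G); exact: all.
Qed.

Definition Pn n : {set T} := [set d | dP (Rn n d 0)].

Lemma Rn_total_ex : exists n, forall x y, Rn n x y.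
Proof.
have key : forall n, (forall x y, Rn n x y) \/ (n < #|Pn n|)%N.
  elim=> [|n [tot|lt]].
  - right; apply/card_gt0P; exists 0; rewrite inE; by apply/dPP.
  - by left => x y; apply: good_next_sub (good_Rn n) _ _ (tot x y).
  - case: (classic (forall x y, Rn n x y)) => tot.
      by left => x y; apply: good_next_sub (good_Rn n) _ _ (tot x y).
    right; have [d [h1 h2]] := growth tot.
    apply: (leq_ltn_trans lt); apply: proper_card; rewrite properE; apply/andP; split.
      apply/subsetP => z; rewrite !inE => /dPP h; apply/dPP.
      exact: good_next_sub (good_Rn n) _ _ h.
    apply/subsetPn; exists d; rewrite inE; first by apply/dPP.
    by apply/dPP.
case: (key #|T|) => [tot|lt]; first by exists #|T|.
by rewrite ltnNge max_card in lt.
Qed.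

End Fin.

End Brace.

Lemma ret_eq (T : finZmodType) (circ : T -> T -> T) (op : T -> T -> T) :
  (forall n x y, (forall z, Rn circ n (op x z) (op y z)) <-> Rn circ n.+1 x y) ->
  forall n x y, ret_rel op n x y <-> Rn circ n x y.
Proof.
move=> H; elim=> [|n IH] x y //=.
split=> h.
  apply/(H n x y) => z; apply/IH; exact: h.
move=> z; apply/IH; move: z; apply/(H n x y); exact: h.
Qed.

Theorem mainTheorem5 (T : finZmodType) (circ : T -> T -> T) (inv : T -> T)
    (e : T) (cdot : T -> T -> T) (X : T -> Prop) (g : T) :
  is_left_brace circ inv e ->
  cyclic_add T ->
  (* (T, cdot) is the decomposable associated cycle set: a . b = lambda_a^{-1}(b) *)
  (forall a b, brace_lambda circ a (cdot a b) = b) ->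
  transitive_cycle_base circ X -> X g ->
  let bullet := fun a b => circ (inv (brace_lambda circ a g)) b in
  (exists n, is_mpl cdot n /\ is_mpl bullet n) /\
  (forall (n : nat) (x y : T), ret_rel cdot n x y <-> ret_rel bullet n x y).
Proof.
move=> Hb Hcyc Hcd HX Xg bullet.
have ecdot : forall x z, cdot x z = brace_lambda circ (inv x) z.
  by move=> x z; rewrite -{2}(Hcd x z) (lamVK Hb).
have Hc : forall n x y, ret_rel cdot n x y <-> Rn circ n x y.
  apply: ret_eq => n x y; exact: (cdot_next Hb (good_Rn Hb n) x y ecdot).
have Hbu : forall n x y, ret_rel bullet n x y <-> Rn circ n x y.
  apply: ret_eq => n x y; exact: (bullet_next Hb Hcyc HX Xg (good_Rn Hb n) x y (fun a b => erefl)).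
split; last first.
  move=> n x y; split => h; [apply/Hbu; apply/Hc | apply/Hc; apply/Hbu]; exact: h.
have [n0 tot] := Rn_total_ex Hb Hcyc HX Xg.
have ex : exists n, dP (forall x y, Rn circ n x y) by exists n0; apply/dPP.
case: (ex_minnP ex) => m /dPP totm minm.
exists m; split; split.
- by move=> x y; apply/Hc; exact: totm.
- by move=> k hk; apply: minm; apply/dPP => x y; apply/Hc; exact: hk.
- by move=> x y; apply/Hbu; exact: totm.
- by move=> k hk; apply: minm; apply/dPP => x y; apply/Hbu; exact: hk.
Qed.
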